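(* For any valid $(\eta,\gamma)$, when WSU-UX is run with $K=2$ on the two-phase loss sequence, almost surely $$\sum_{t=1}^T\sum_{j\in[K]}\pi_{t,j}\hat\ell_{t,j}-\sum_{t=1}^T\hat\ell_{t,1}\ \ge\ \frac{\ln\pi_{T+1,1}+\ln K}{\eta}+\frac{\eta}{4}\sum_{t=1}^T\Bigl(\hat\ell_{t,1}-\sum_{j\in[K]}\pi_{t,j}\hat\ell_{t,j}\Bigr)^2.$$
   Context: WSU-UX. Fix integers $K\ge 2$ and $T\ge 1$ and hyperparameters $\eta,\gamma$. The pair $(\eta,\gamma)$ is called valid if $\eta,\gamma\in(0,1/2)$ and $\eta K/\gamma\le 1/2$. Given a fixed loss sequence $\ell_t\in[0,1]^K$, WSU-UX sets $\pi_{1,i}=1/K$ and in each round $t$: forms $\tilde\pi_{t,i}=(1-\gamma)\pi_{t,i}+\gamma/K$; draws $I_t$ with $\Pr(I_t=i\mid\mathcal F_{t-1})=\tilde\pi_{t,i}$; sets $\hat\ell_{t,i}=\ell_{t,i}\mathbf 1[I_t=i]/\tilde\pi_{t,i}$; and updates $\pi_{t+1,i}=\pi_{t,i}\bigl(1-\eta(\hat\ell_{t,i}-\sum_{j}\pi_{t,j}\hat\ell_{t,j})\bigr)$; $\mathcal F_t$ is the history generated by $I_1,\dots,I_t$. Two-phase loss sequence ($K=2$, $T$ a multiple of $100$, $T_1=T/100$): $\ell_{t,1}=1,\ell_{t,2}=0$ for $1\le t\le T_1$ and $\ell_{t,1}=0,\ell_{t,2}=1$ for $T_1<t\le T$. 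*)

(* Defs.v *)
From HB Require Import structures.
From mathcomp Require Import all_boot all_order all_algebra.
From mathcomp Require Import reals exp.
Set Implicit Arguments. Unset Strict Implicit. Unset Printing Implicit Defensive.
Import Order.TTheory GRing.Theory Num.Theory.
Local Open Scope ring_scope.

Section WSUUX.
Variables (R : realType) (K : nat) (eta gamma : R).
(* loss sequence: ell t i = loss of arm i at round t (t >= 1) *)
Variable ell : nat -> 'I_K -> R.
Variable I : nat -> 'I_K.

Definition valid : Prop :=
  [/\ 0 < eta < 1/2, 0 < gamma < 1/2 & eta * K%:R / gamma <= 1/2].

Definition mixw (p : {ffun 'I_K -> R}) (i : 'I_K) : R :=
  (1 - gamma) * p i + gamma / K%:R.

Definition lhatw (p : {ffun 'I_K -> R}) (t : nat) (i : 'I_K) : R :=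
  ell t i * (I t == i)%:R / mixw p i.

(* wsu n = pi_{n+1}; pi_1 = uniform *)
Fixpoint wsu (n : nat) : {ffun 'I_K -> R} :=
  match n with
  | 0 => [ffun _ => 1 / K%:R]
  | n'.+1 =>
      let p := wsu n' in
      let t := n'.+1 in
      [ffun i => p i * (1 - eta * (lhatw p t i - \sum_j p j * lhatw p t j))]
  end.

End WSUUX.
Definition wsu_pi (R : realType) (K : nat) (eta gamma : R) (ell : nat -> 'I_K -> R)
  (I : nat -> 'I_K) (t : nat) (i : 'I_K) : R := wsu eta gamma ell I t.-1 i.
Definition wsu_pitilde (R : realType) (K : nat) (eta gamma : R) (ell : nat -> 'I_K -> R)
  (I : nat -> 'I_K) (t : nat) (i : 'I_K) : R :=
  mixw gamma (wsu eta gamma ell I t.-1) i.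
Definition wsu_lhat (R : realType) (K : nat) (eta gamma : R) (ell : nat -> 'I_K -> R)
  (I : nat -> 'I_K) (t : nat) (i : 'I_K) : R :=
  lhatw gamma ell I (wsu eta gamma ell I t.-1) t i.

(* Two-phase loss sequence for K = 2, T1 = T/100.
   Arm 1 is ord0, arm 2 is ord1 (0-based indexing of 'I_2). *)
Definition two_phase {R : realType} (T : nat) (t : nat) (i : 'I_2) : R :=
  if (t <= T %/ 100)%N then (if i == ord0 then 1 else 0)
  else (if i == ord0 then 0 else 1).

(* Main.v *)
Require Import Defs.
From HB Require Import structures.
From mathcomp Require Import all_boot all_order all_algebra.
From mathcomp Require Import reals exp.
From mathcomp Require Import ring lra.
Import Order.TTheory GRing.Theory Num.Theory.
Local Open Scope ring_scope.

Lemma poly4 (R : realType) (y : R) : -1/2 <= y <= 1/2 ->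
  1 - y <= (1 + (- y - y^+2/4%:R)/4%:R) ^+ 4.
Proof.
move=> /andP[h1 h2].
rewrite -subr_ge0.
have -> : (1 + (- y - y^+2/4%:R)/4%:R) ^+ 4 - (1 - y) =
  y^+2 * (1/8%:R + y/8%:R - 5%:R*y^+2/256%:R - y^+3/128%:R + y^+4/2048%:R
          + y^+5/4096%:R + y^+6/65536%:R) by field.
apply: mulr_ge0; first by rewrite sqr_ge0.
have hy2 : 0 <= y^+2 <= 1/4 by apply/andP; split; [rewrite sqr_ge0| nra].
have hy3 : -1/8 <= y^+3 <= 1/8 by apply/andP; split; nra.
have hy4 : 0 <= y^+4 <= 1/16 by apply/andP; split; nra.
have hy5 : -1/32 <= y^+5 <= 1/32 by apply/andP; split; nra.
have hy6 : 0 <= y^+6 <= 1/64 by apply/andP; split; nra.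
lra.
Qed.

Lemma ln_bound (R : realType) (y : R) : -1/2 <= y <= 1/2 ->
  ln (1 - y) <= - y - y^+2/4%:R.
Proof.
move=> hy; have /andP[h1 h2] := hy.
have hz : 0 < 1 + (- y - y^+2/4%:R)/4%:R by nra.
rewrite -[X in _ <= X]expRK ler_ln ?posrE ?expR_gt0 //; last by lra.
apply: (le_trans (@poly4 _ y hy)).
rewrite -[X in _ <= _ X](mulfVK (_ : 4%:R != 0 :> R)) ?pnatr_eq0 //.
rewrite expRM_natr; apply: lerXn2r; rewrite ?nnegrE ?expR_ge0 ?(ltW hz) //.
exact: expR_ge1Dx.
Qed.

Definition o1 : 'I_2 := @ord_max 1.

Lemma sum2 (R : realType) (F : 'I_2 -> R) : \sum_(j < 2) F j = F ord0 + F o1.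
Proof. by rewrite big_ord_recl big_ord1; congr (_ + F _); apply: val_inj. Qed.

Lemma ord2_cases (j : 'I_2) : j = ord0 \/ j = o1.
Proof. case: j => [[|[|m]]] h; [left|right|by []]; exact: val_inj. Qed.

Section Main.
Variables (R : realType) (eta gamma : R) (ell : nat -> 'I_2 -> R) (I : nat -> 'I_2).
Hypothesis hv : @valid R 2 eta gamma.
Hypothesis hell : forall t i, 0 <= ell t i <= 1.

Let P n := wsu eta gamma ell I n.
Let L n j := lhatw gamma ell I (P n) n.+1 j.
Let A n := \sum_(j < 2) P n j * L n j.
Let x n := L n ord0 - A n.

Lemma lh_bounds (p : {ffun 'I_2 -> R}) t i : (forall j, 0 <= p j) -> p ord0 + p o1 = 1 ->
  0 <= lhatw gamma ell I p t i /\ eta * lhatw gamma ell I p t i <= 1/2.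
Proof.
move=> hp hs; case: hv => /andP[he0 he1] /andP[hg0 hg1] hk.
have hm : gamma / 2 <= mixw gamma p i.
  rewrite /mixw; have := hp i; nra.
have hm0 : 0 < mixw gamma p i by apply: lt_le_trans hm; rewrite divr_gt0.
have ha : 0 <= ell t i * (I t == i)%:R <= 1.
  by have := hell t i; case: (I t == i) => /=; rewrite ?mulr1 ?mulr0 //; lra.
move: ha => /andP[ha0 ha1].
rewrite /lhatw; split; first by rewrite divr_ge0 // ltW.
set a := ell t i * _ in ha0 ha1 *; set m := mixw gamma p i in hm hm0 *.
have hk' : eta * 2 <= gamma / 2.
  by move: hk; rewrite ler_pdivrMr // => h; lra.
rewrite mulrA ler_pdivrMr //.
nra.
Qed.

Lemma invariant n :
  [/\ 0 < P n ord0, 0 < P n o1, P n ord0 + P n o1 = 1 &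
   ln (P n ord0) + ln 2%:R <= - (eta * \sum_(i < n) x i) - eta ^+ 2 / 4%:R * \sum_(i < n) x i ^+ 2].
Proof.
case: hv => /andP[he0 he1] /andP[hg0 hg1] hk.
elim: n => [|n [h0 h1 hs hl]].
  rewrite /P /= !ffunE !big_ord0 !mulr0 oppr0 ?subr0.
  rewrite -lnM ?posrE ?divr_gt0 // mul1r mulVf ?pnatr_eq0 // ln1; split; lra.
have hp : forall j, 0 <= P n j.
  by move=> j; case: (ord2_cases j) => ->; apply: ltW.
have [l00 l01] := lh_bounds (P n) n.+1 ord0 hp hs.
have [l10 l11] := lh_bounds (P n) n.+1 o1 hp hs.
have eA : A n = P n ord0 * L n ord0 + P n o1 * L n o1 by rewrite /A sum2.
have eP : forall j, P n.+1 j = P n j * (1 - eta * (L n j - A n)) by move=> j; rewrite /P /= ffunE.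
have hx : -1/2 <= eta * x n <= 1/2.
  rewrite /x eA; rewrite /L in l00 l01 l10 l11 *.
  apply/andP; split; nra.
rewrite !eP !big_ord_recr /=.
have hA0 : 0 <= A n by rewrite eA; rewrite /L in l00 l10 *; nra.
have f0 : 0 < 1 - eta * (L n ord0 - A n) by rewrite /L in l01 *; nra.
have f1 : 0 < 1 - eta * (L n o1 - A n) by rewrite /L in l11 *; nra.
split.
- by rewrite mulr_gt0.
- by rewrite mulr_gt0.
- have e : P n ord0 * (1 - eta * (L n ord0 - A n)) + P n o1 * (1 - eta * (L n o1 - A n))
    = (P n ord0 + P n o1) * (1 + eta * A n) - eta * A n by rewrite eA; ring.
  by rewrite e hs; ring.
rewrite lnM ?posrE //.
have := @ln_bound _ _ hx; rewrite -/(x n) exprMn => hb.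
rewrite /x in hb *; lra.
Qed.

End Main.

Theorem mainTheorem8 (R : realType) (T : nat) (eta gamma : R)
    (I : nat -> 'I_2) :
  (0 < T)%N -> (100 %| T)%N ->
  @valid R 2 eta gamma ->
  0 < \prod_(1 <= t < T.+1) wsu_pitilde eta gamma (two_phase T) I t (I t) ->
  let ph := wsu_pi eta gamma (two_phase T) I in
  let lh := wsu_lhat eta gamma (two_phase T) I in
  \sum_(1 <= t < T.+1) \sum_(j < 2) ph t j * lh t j
    - \sum_(1 <= t < T.+1) lh t ord0
  >= (ln (ph T.+1 ord0) + ln 2%:R) / eta
     + eta / 4%:R * \sum_(1 <= t < T.+1)
         (lh t ord0 - \sum_(j < 2) ph t j * lh t j) ^+ 2.
Proof.
move=> _ _ hv _ /=.
have hell : forall t i, 0 <= @two_phase R T t i <= 1.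
  by move=> t i; rewrite /two_phase; case: ifP => _; case: ifP => _; rewrite ?lexx ?ler01.
have [_ _ _ hl] := @invariant R eta gamma (two_phase T) I hv hell T.
rewrite !big_add1 /= !big_mkord.
rewrite /wsu_pi /wsu_lhat /=.
rewrite sumrB in hl.
set Lg := ln _ + ln _ in hl *.
set Q := \sum_(i < T) _ ^+ 2 in hl *.
set SB := \sum_(i < T) lhatw _ _ _ _ _ _ in hl *.
set SA := \sum_(i < T) \sum_(j < 2) _ in hl *.
case: hv => /andP[he0 _] _ _.
have -> : Lg / eta + eta / 4%:R * Q = (Lg + eta ^+ 2 / 4%:R * Q) / eta.
  by field; rewrite gt_eqF.
rewrite ler_pdivrMr //.
nra.
Qed.
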